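(* Let $\mathcal C$ be a finite commutative semigroup. Then $\mathsf D(\mathcal C)=\mathsf d(\mathcal C)+1\le|\mathcal C|$.
   Context: All semigroups are commutative, written additively, and have an identity element $0$; an empty sum equals $0$. For such $\mathcal C$, $\mathsf d(\mathcal C)$ is the smallest $d\in\mathbb N_0\cup\{\infty\}$ such that for all $n\in\mathbb N$ and $c_1,\dots,c_n\in\mathcal C$ there is $\Omega\subset[1,n]$ with $|\Omega|\le d$ and $\sum_{\nu=1}^n c_\nu=\sum_{\nu\in\Omega}c_\nu$. $\mathsf D(\mathcal C)$ is the smallest $\ell\in\mathbb N\cup\{\infty\}$ such that for all $n\ge\ell$ and $c_1,\dots,c_n\in\mathcal C$ there is a proper subset $\Omega\subsetneq[1,n]$ with $\sum_{\nu=1}^n c_\nu=\sum_{\nu\in\Omega}c_\nu$. *)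

(* Defs.v *)
(* A commutative semigroup with identity 0, written additively,
   is an nmodType; finite ones are finNmodType. *)
From HB Require Import structures.
From mathcomp Require Import all_boot all_order all_algebra.
Set Implicit Arguments. Unset Strict Implicit. Unset Printing Implicit Defensive.
Import GRing.Theory.
Local Open Scope ring_scope.

Definition small_d_prop (C : nmodType) (d : nat) : Prop :=
  forall (n : nat) (c : 'I_n -> C), (0 < n)%N ->
    exists Om : {set 'I_n}, (#|Om| <= d)%N /\
      \sum_(i < n) c i = \sum_(i in Om) c i.

Definition is_small_d (C : nmodType) (d : nat) : Prop :=
  small_d_prop C d /\ forall d', small_d_prop C d' -> (d <= d')%N.

Definition large_D_prop (C : nmodType) (l : nat) : Prop :=
  forall (n : nat), (l <= n)%N -> forall (c : 'I_n -> C),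
    exists Om : {set 'I_n}, Om \proper [set: 'I_n] /\
      \sum_(i < n) c i = \sum_(i in Om) c i.

Definition is_large_D (C : nmodType) (l : nat) : Prop :=
  (0 < l)%N /\ large_D_prop C l /\
  forall l', (0 < l')%N -> large_D_prop C l' -> (l <= l')%N.

(* Main.v *)
Require Import Defs.
From HB Require Import structures.
From mathcomp Require Import all_boot all_order all_algebra.
From mathcomp Require Import zify.
From Stdlib Require Import Classical.

Section Helpers.
Import GRing.Theory.
Local Open Scope ring_scope.

Lemma reduce (C : nmodType) (k : nat) :
  (forall m (c : 'I_m -> C), (k <= m)%N ->
     exists Om : {set 'I_m}, (#|Om| < m)%N /\ \sum_(i < m) c i = \sum_(i in Om) c i) ->
  small_d_prop C k.-1.
Proof.
move=> H n c n0.
pose P := fun O : {set 'I_n} => \sum_(i < n) c i == \sum_(i in O) c i.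
have PT : P setT by rewrite /P; apply/eqP; apply: eq_bigl => i; rewrite in_setT.
have [O /eqP PO minO] := arg_minnP (fun O : {set 'I_n} => #|O|) PT.
exists O; split; last exact: PO.
suff : (#|O| < k)%N by lia.
rewrite ltnNge; apply/negP => kO.
have [Om' [cOm' sOm']] := H _ (fun j => c (enum_val j)) kO.
pose O2 := [set (enum_val j : 'I_n) | j in Om'].
have c2 : #|O2| = #|Om'| by apply: card_imset; exact: enum_val_inj.
have hP : P O2.
  rewrite /P /O2 big_imset /=; last by move=> x y _ _; exact: enum_val_inj.
  by rewrite -sOm' -big_enum_val PO.
have := minO O2 hP; rewrite c2.
move=> h; move: cOm'; set t := (X in (_ < X)%N -> _); have -> : t = #|O| by rewrite /t; apply: eq_card.
lia.
Qed.

Lemma pigeon (C : finNmodType) m (c : 'I_m -> C) : (#|C| <= m)%N ->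
  exists Om : {set 'I_m}, (#|Om| < m)%N /\ \sum_(i < m) c i = \sum_(i in Om) c i.
Proof.
move=> Cm.
pose f := fun k : 'I_m.+1 => \sum_(i < m | (i < k)%N) c i.
have : [exists i : 'I_m.+1, exists j : 'I_m.+1, (i < j)%N && (f i == f j)].
  case: (boolP [exists i : 'I_m.+1, exists j : 'I_m.+1, (i < j)%N && (f i == f j)]) => // /negP Hn; exfalso.
  have inj : injective f.
    move=> x y Exy.
    case: (ltngtP x y) => h; last exact: val_inj; exfalso; apply: Hn.
    - by apply/existsP; exists x; apply/existsP; exists y; rewrite h Exy eqxx.
    - by apply/existsP; exists y; apply/existsP; exists x; rewrite h Exy eqxx.
  have := leq_card f inj; rewrite card_ord. move=> h; by have := leq_trans h Cm; rewrite ltnn.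
case/existsP=> i /existsP [j /andP [ij /eqP fij]].
exists [set x : 'I_m | (x < i)%N || (j <= x)%N]; split.
  have im : (i < m)%N by have := ltn_ord j; lia.
  rewrite -[m in (_ < m)%N]card_ord -cardsT; apply: proper_card; rewrite properT.
  apply/negP => /eqP E.
  have : Ordinal im \in [set x : 'I_m | (x < i)%N || (j <= x)%N] by rewrite E in_setT.
  rewrite inE /=; lia.
rewrite (bigID (fun x : 'I_m => (x < j)%N)) /=.
rewrite [RHS](bigID (fun x : 'I_m => (x < j)%N)) /=.
congr (_ + _).
  rewrite -/(f j) -fij /f; apply: eq_bigl => x; rewrite inE; lia.
apply: eq_bigl => x; rewrite inE; lia.
Qed.

Lemma min_ex (P : nat -> Prop) n : P n -> exists d, P d /\ forall d', P d' -> (d <= d')%N.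
Proof.
elim: n {-2}n (leqnn n) => [|k IH] n hn Pn.
  exists n; split=> // d' _; lia.
case: (classic (exists d', P d' /\ (d' < n)%N)) => [[d' [Pd' hd']]|nh].
  by apply: (IH d') => //; lia.
exists n; split=> // d' Pd'; rewrite leqNgt; apply/negP => h; apply: nh; by exists d'.
Qed.

End Helpers.

Theorem lemma5p10 (C : finNmodType) :
  exists d : nat, is_small_d C d /\ is_large_D C d.+1 /\ (d.+1 <= #|C|)%N.
Proof.
have C0 : (0 < #|C|)%N by apply/card_gt0P; exists 0%R.
have sd : small_d_prop C #|C|.-1 by apply: reduce => m c Cm; exact: pigeon.
have [d [sdd mind]] := min_ex (small_d_prop C) _ sd.
exists d; split; first by split.
have dC : (d <= #|C|.-1)%N by apply: mind.
split; last by lia.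
split=> //; split.
  move=> n dn c; have [Om [cOm sOm]] := sdd n c ltac:(lia).
  exists Om; split=> //; rewrite properT; apply/negP => /eqP E.
  by move: cOm; rewrite E cardsT card_ord; lia.
move=> l l0 Dl.
suff : small_d_prop C l.-1 by move/mind; lia.
apply: reduce => m c lm.
have [Om [pOm sOm]] := Dl m lm c.
exists Om; split=> //.
by rewrite -[m in (_ < m)%N]card_ord -cardsT; apply: proper_card.
Qed.
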